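(* Let $\mathcal B$ be a finite set of finite Cornish algebras of type $F$ and let $\mathcal Y=\{D(\mathbf A)\mid \mathbf A\in\mathcal B\}$. Then the algebras in $\mathcal B$ are quasi-primal and share a common ternary discriminator term provided: (i) each $\mathbb X\in\mathcal Y$ has no non-empty proper substructures, and (ii) there exists a unary term $t$ in the signature $F$ with $t\in T^-$ such that, for all $\mathbb X\in\mathcal Y$ and all $a\in X$, the orbit of $a$ under $t^{\mathbb X}$ eventually reaches an odd cycle. Moreover, if (ii) is replaced by (ii)$'$ there exists a unary term $t$ in the signature $F$ with $t\in T^-$ such that, for all $\mathbb X\in\mathcal Y$, the map $t^{\mathbb X}$ is constant, then (under (i) and (ii)$'$) the algebras in $\mathcal B$ are semi-primal and share a common ternary discriminator term.
   Context: $F=F^+\,\dot\cup\,F^-$ is a set of unary operation symbols. A Cornish algebra of type $F$: a bounded distributive lattice with unary operations $f^{\mathbf A}$ ($f\in F$), an endomorphism for $f\in F^+$ and a dual endomorphism for $f\in F^-$. A Cornish space of type $F$: a Priestley space with unary operations $f^{\mathbb X}$ that are continuous order-preserving for $f\in F^+$ and continuous order-reversing for $f\in F^-$. A substructure is a closed subset closed under all $f^{\mathbb X}$. $D(\mathbf A)$: the set of bounded-lattice homomorphisms from the lattice reduct of $\mathbf A$ to $\mathbf 2$, ordered pointwise, topology from $\{0,1\}^A$, with $f^{D(\mathbf A)}(x)=x\circ f^{\mathbf A}$ for $f\in F^+$ and $c\circ x\circ f^{\mathbf A}$ for $f\in F^-$ ($c$ Boolean complement on $\{0,1\}$). Unary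 terms in the signature $F$ are finite composites $f_1(f_2(\cdots f_k(v)))$ of symbols of $F$; $T^-$ is the set of such terms containing an odd number of occurrences of symbols from $F^-$ (so $t^{\mathbb X}$ is order-reversing for $t\in T^-$), and $t^{\mathbb X}$ is the corresponding composite of the maps $f^{\mathbb X}$. The orbit of $a$ under a self-map $g$ of a finite set is $a,g(a),g^2(a),\dots$; choosing $n<m$ with $a,g(a),\dots,g^{m-1}(a)$ pairwise distinct and $g^m(a)=g^n(a)$, the orbit eventually reaches an odd cycle if $m-n$ is odd. Quasi-primal: finite algebra with the ternary discriminator ($\tau(x,y,z)=x$ if $x\ne y$, $=z$ if $x=y$) as a term function; share a common ternary discriminator term: one ternary term induces $\tau$ on each. Semi-primal: finite algebra with a majority term such that every subalgebra of $\mathbf A^2$ is a product of subalgebras or the graph of the identity on a subalgebra. *)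

(* Defs.v *)
From HB Require Import structures.
From mathcomp Require Import all_boot all_order.
Set Implicit Arguments. Unset Strict Implicit. Unset Printing Implicit Defensive.
Import Order.TTheory.
Local Open Scope order_scope.

(* The type F = F^+ \dot\cup F^- is a type F with a polarity map:
   neg f = true  iff  f \in F^-. *)

Record cornish (F : Type) (neg : F -> bool) := Cornish {
  cdisp : Order.disp_t;
  ccar : finTBDistrLatticeType cdisp;
  cop : F -> ccar -> ccar;
  cop_meet : forall f (x y : ccar),
    cop f (x `&` y) = if neg f then cop f x `|` cop f y else cop f x `&` cop f y;
  cop_join : forall f (x y : ccar),
    cop f (x `|` y) = if neg f then cop f x `&` cop f y else cop f x `|` cop f y;
  cop_bot : forall f, cop f \bot = if neg f then \top else \bot;
  cop_top : forall f, cop f \top = if neg f then \bot else \top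
}.
Arguments cornish : clear implicits.
Arguments cop {F neg} c f x.

Inductive term (F V : Type) : Type :=
| TVar of V
| TBot
| TTop
| TMeet of term F V & term F V
| TJoin of term F V & term F V
| TOp of F & term F V.
Arguments TBot {F V}. Arguments TTop {F V}.

Fixpoint teval F neg (A : cornish F neg) V (e : V -> ccar A) (t : term F V)
  : ccar A :=
  match t with
  | TVar v => e v
  | TBot => \bot
  | TTop => \top
  | TMeet t1 t2 => teval e t1 `&` teval e t2
  | TJoin t1 t2 => teval e t1 `|` teval e t2
  | TOp f t1 => cop A f (teval e t1)
  end.

Definition env3 (T : Type) (x y z : T) : 'I_3 -> T :=
  fun i => nth x [:: x; y; z] i.

Definition discr (T : eqType) (x y z : T) : T := if x != y then x else z.

Definition is_discriminator_term F neg (A : cornish F neg) (t : term F 'I_3) :=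
  forall x y z : ccar A, teval (env3 x y z) t = discr x y z.

Definition is_majority_term F neg (A : cornish F neg) (t : term F 'I_3) :=
  forall x y : ccar A,
    [/\ teval (env3 x x y) t = x, teval (env3 x y x) t = x
      & teval (env3 y x x) t = x].

Definition quasi_primal F neg (A : cornish F neg) :=
  exists t : term F 'I_3, is_discriminator_term A t.

Definition subuniv F neg (A : cornish F neg) (S : {set ccar A}) :=
  [/\ \bot \in S, \top \in S,
      (forall x y, x \in S -> y \in S -> x `&` y \in S),
      (forall x y, x \in S -> y \in S -> x `|` y \in S)
    & (forall f x, x \in S -> cop A f x \in S)].

Definition subuniv2 F neg (A : cornish F neg) (S : {set ccar A * ccar A}) :=
  [/\ (\bot, \bot) \in S, (\top, \top) \in S,
      (forall p q, p \in S -> q \in S -> (p.1 `&` q.1, p.2 `&` q.2) \in S),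
      (forall p q, p \in S -> q \in S -> (p.1 `|` q.1, p.2 `|` q.2) \in S)
    & (forall f p, p \in S -> (cop A f p.1, cop A f p.2) \in S)].

Definition semi_primal F neg (A : cornish F neg) :=
  (exists m : term F 'I_3, is_majority_term A m) /\
  forall S : {set ccar A * ccar A}, subuniv2 S ->
    (exists B1 B2 : {set ccar A}, [/\ subuniv B1, subuniv B2 & S = setX B1 B2])
    \/ (exists B : {set ccar A}, subuniv B /\ S = [set (b, b) | b in B]).

Definition Dpts F neg (A : cornish F neg) : {set {ffun ccar A -> bool}} :=
  [set x : {ffun ccar A -> bool} |
     [&& [forall a, forall b, x (a `&` b) == x a && x b],
         [forall a, forall b, x (a `|` b) == x a || x b],
         x \bot == false & x \top == true]].

Definition Dop F neg (A : cornish F neg) (f : F) (x : {ffun ccar A -> bool})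
  : {ffun ccar A -> bool} :=
  [ffun a => if neg f then ~~ x (cop A f a) else x (cop A f a)].

Arguments Dop {F neg} A f x.

(** Substructure of D(A): subset of D(A) closed under all f^{D(A)}.
    (D(A) is finite with the discrete topology, so every subset is closed.) *)
Definition Dsubstructure F neg (A : cornish F neg) (S : {set {ffun ccar A -> bool}}) :=
  S \subset Dpts A /\ forall (f : F) x, x \in S -> Dop A f x \in S.

(** Unary terms f_1(f_2(...f_k(v))) represented as [:: f_1; ...; f_k]. *)
Definition uterm_D F neg (A : cornish F neg) (t : seq F) (x : {ffun ccar A -> bool}) :=
  foldr (fun f y => Dop A f y) x t.

Definition in_Tminus F (neg : F -> bool) (t : seq F) := odd (count neg t).

Definition reaches_odd_cycle (T : Type) (g : T -> T) (a : T) :=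
  exists n m : nat, [/\ (n < m)%N,
     (forall i j, (i < m)%N -> (j < m)%N -> iter i g a = iter j g a -> i = j),
     iter m g a = iter n g a & odd (m - n)].

(* Main.v *)
Require Import Defs.
From mathcomp Require Import all_boot all_order.
From Stdlib Require Import ClassicalEpsilon.
Set Implicit Arguments. Unset Strict Implicit. Unset Printing Implicit Defensive.
Import Order.TTheory.
Local Open Scope order_scope.
Section Sep.
Variables (d : Order.disp_t) (L : finTBDistrLatticeType d).

Lemma prime_sep (a b : L) : ~~ (a <= b) ->
  exists p : {ffun L -> bool},
    [/\ forall x y, p (x `&` y) = p x && p y,
        forall x y, p (x `|` y) = p x || p y,
        p \bot = false, p \top = true & p a && ~~ p b].
Proof.
move=> nab.
pose P := fun j : L => (j <= a) && ~~ (j <= b).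
have Pa : P a by rewrite /P lexx.
case: (arg_minnP (fun j => #|[pred y : L | y <= j]|) Pa) => j Pj jmin.
have minj : forall y, y < j -> ~~ P y.
  move=> y ltyj; apply/negP => Py.
  have := jmin y Py; apply/negP; rewrite -ltnNge.
  apply: proper_card; apply/properP; split.
    by apply/subsetP => z; rewrite !inE => zy; apply: le_trans zy (ltW ltyj).
  exists j; rewrite !inE ?lexx //; apply/negP => jy; by rewrite (le_gtF jy) in ltyj.
move: Pj; rewrite /P => /andP [ja njb].
have key : forall x, j `&` x < j -> j `&` x <= b.
  move=> x lt; have := minj _ lt; rewrite /P negb_and negbK.
  by rewrite (le_trans (leIl _ _) ja).
exists [ffun x => j <= x]; split.
- by move=> x y; rewrite !ffunE lexI.
- move=> x y; rewrite !ffunE; apply/idP/idP; last first.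
    by case/orP => h; [apply: lexUl | apply: lexUr].
  move=> jxy; apply/negPn/negP; rewrite negb_or => /andP [nx ny].
  have lx : j `&` x < j by rewrite lt_neqAle leIl andbT; apply: contra nx => /eqP <-; apply: leIr.
  have ly : j `&` y < j by rewrite lt_neqAle leIl andbT; apply: contra ny => /eqP <-; apply: leIr.
  have : j <= b.
    by rewrite -(meet_idPl jxy) meetUr leUx !key.
  by rewrite (negbTE njb).
- rewrite ffunE lex0; apply/negP => /eqP j0; move: njb; by rewrite j0 le0x.
- by rewrite ffunE lex1.
- by rewrite !ffunE ja.
Qed.
End Sep.

Definition pb (P : Prop) : bool := if excluded_middle_informative P then true else false.
Lemma pbP (P : Prop) : pb P <-> P.
Proof. by rewrite /pb; case: excluded_middle_informative. Qed.

Section Alg.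
Variables (F : Type) (neg : F -> bool) (A : cornish F neg).

Definition ua (w : seq F) (a : ccar A) := foldl (fun a f => cop A f a) a w.

Lemma DptsP (x : {ffun ccar A -> bool}) : x \in Dpts A ->
  [/\ forall a b, x (a `&` b) = x a && x b,
      forall a b, x (a `|` b) = x a || x b,
      x \bot = false & x \top = true].
Proof.
rewrite inE => /and4P [/forallP H1 /forallP H2 /eqP H3 /eqP H4]; split => //.
- by move=> a b; apply/eqP; move/forallP: (H1 a).
- by move=> a b; apply/eqP; move/forallP: (H2 a).
Qed.

Lemma DptsI (x : {ffun ccar A -> bool}) :
  (forall a b, x (a `&` b) = x a && x b) ->
  (forall a b, x (a `|` b) = x a || x b) ->
  x \bot = false -> x \top = true -> x \in Dpts A.
Proof.
move=> H1 H2 H3 H4; rewrite inE H3 H4 !eqxx !andbT.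
by apply/andP; split; apply/forallP => a; apply/forallP => b; rewrite ?H1 ?H2.
Qed.

Lemma sepA (a b : ccar A) : (forall p, p \in Dpts A -> p a = p b) -> a = b.
Proof.
move=> H; apply/le_anti; apply/andP; split; apply/negPn/negP => n.
- have [p [H1 H2 H3 H4 /andP [pa pb']]] := prime_sep n.
  have := H p (DptsI H1 H2 H3 H4); by rewrite pa (negbTE pb').
- have [p [H1 H2 H3 H4 /andP [pa pb']]] := prime_sep n.
  have := H p (DptsI H1 H2 H3 H4); by rewrite pa (negbTE pb').
Qed.

Lemma sepA' (a b : ccar A) : a != b -> exists2 p, p \in Dpts A & p a != p b.
Proof.
move=> nab; case: (classic (exists2 p, p \in Dpts A & p a != p b)) => // H.
move/negP: nab; case; apply/eqP/sepA => p pD.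
apply/eqP/negPn/negP => ne; apply: H; by exists p.
Qed.

Lemma Dop_Dpts f (x : {ffun ccar A -> bool}) : x \in Dpts A -> Dop A f x \in Dpts A.
Proof.
case/DptsP => H1 H2 H3 H4; apply: DptsI => [a b|a b||]; rewrite !ffunE.
- by rewrite cop_meet; case: (neg f); rewrite ?H1 ?H2 ?negb_or.
- by rewrite cop_join; case: (neg f); rewrite ?H1 ?H2 ?negb_and.
- by rewrite cop_bot; case: (neg f); rewrite ?H3 ?H4.
- by rewrite cop_top; case: (neg f); rewrite ?H3 ?H4.
Qed.

Lemma uterm_Dpts w (x : {ffun ccar A -> bool}) : x \in Dpts A -> uterm_D w x \in Dpts A.
Proof. by move=> xD; elim: w => //= f w IH; apply: Dop_Dpts. Qed.

Lemma K1 w (x : {ffun ccar A -> bool}) a :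
  uterm_D w x a = odd (count neg w) (+) x (ua w a).
Proof.
elim: w a => [|f w IH] a //=.
rewrite ffunE IH oddD; by case: (neg f); rewrite /= ?addbA ?negb_add.
Qed.

Lemma pt_ua w (x : {ffun ccar A -> bool}) a :
  x (ua w a) = odd (count neg w) (+) uterm_D w x a.
Proof. by rewrite K1 addbA addbb. Qed.

Lemma uterm_cat w1 w2 (x : {ffun ccar A -> bool}) : uterm_D (w1 ++ w2) x = uterm_D w1 (uterm_D w2 x).
Proof. by rewrite /uterm_D foldr_cat. Qed.

Lemma ua_cat w1 w2 a : ua (w1 ++ w2) a = ua w2 (ua w1 a).
Proof. by rewrite /ua foldl_cat. Qed.

Lemma uterm_rep n w (x : {ffun ccar A -> bool}) :
  uterm_D (flatten (nseq n w)) x = iter n (uterm_D w) x.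
Proof. by elim: n => //= n IH; rewrite uterm_cat IH. Qed.

Lemma count_rep n w : count neg (flatten (nseq n w)) = n * count neg w.
Proof. by elim: n => //= n IH; rewrite count_cat IH mulSn. Qed.

Lemma reach :
  (forall S : {set {ffun ccar A -> bool}}, Dsubstructure S -> S = set0 \/ S = Dpts A) ->
  forall c q, c \in Dpts A -> q \in Dpts A -> exists w, q = uterm_D w c.
Proof.
move=> H c q cD qD.
pose R := [set y : {ffun ccar A -> bool} | pb (exists w, y = uterm_D w c)].
have RS : Dsubstructure R.
  split.
    apply/subsetP => y; rewrite inE => /pbP [w ->]; exact: uterm_Dpts.
  move=> f y; rewrite !inE => /pbP [w ->]; apply/pbP; by exists (f :: w).
have cR : c \in R by rewrite inE; apply/pbP; exists [::].
case: (H R RS) => HR.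
  by move: cR; rewrite HR inE.
by move: qD; rewrite -HR inE => /pbP.
Qed.

End Alg.

Section Disc.
Variables (F : Type) (neg : F -> bool) (A : cornish F neg).
Variables (t : seq F) (M : nat) (W : seq (seq F)).

Definition tM := flatten (nseq M t).
Definition sE (a : ccar A) := ua tM a.
Definition uE (a b : ccar A) := (a `&` sE b) `|` (sE a `&` b).
Definition vE (a b : ccar A) := ua (tM ++ tM) (uE a b).
Definition DE (a b : ccar A) :=
  foldr (fun w acc => vE (ua w a) (ua w b) `|` acc) \bot W.
Definition dE (a b z : ccar A) := (ua t (DE a b) `&` z) `|` (DE a b `&` a).

Hypothesis ot : odd (count neg t).
Hypothesis oM : odd M.
Local Notation T := (uterm_D (A:=A) t).
Hypothesis HM : forall p, p \in Dpts A -> iter (M + M) T p = iter M T p.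
Hypothesis HW : forall c q, c \in Dpts A -> q \in Dpts A ->
  exists w, List.In w W /\ uterm_D w c = q.

Lemma tM_Dpts p : p \in Dpts A -> uterm_D tM p = iter M T p.
Proof. by move=> _; rewrite /tM uterm_rep. Qed.

Lemma iterT_Dpts n p : p \in Dpts A -> iter n T p \in Dpts A.
Proof. by move=> pD; rewrite -uterm_rep; apply: uterm_Dpts. Qed.

Lemma L1 p b : p \in Dpts A -> p (sE b) = ~~ (iter M T p b).
Proof.
move=> pD; rewrite /sE pt_ua /tM count_rep oddM ot oM uterm_rep.
by [].
Qed.

Lemma L2 p a b : p \in Dpts A ->
  p (vE a b) = (iter M T p a != iter M T p b).
Proof.
move=> pD; rewrite /vE pt_ua count_cat oddD addbb /= uterm_cat !/tM !uterm_rep.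
rewrite -iterD HM //.
set c := iter M T p.
have cD : c \in Dpts A by apply: iterT_Dpts.
have cc : iter M T c = c by rewrite /c -iterD HM.
case/DptsP: cD => H1 H2 _ _.
rewrite /uE H2 !H1 !L1 ?cc; last by apply: iterT_Dpts.
  by case: (c a); case: (c b).
by apply: iterT_Dpts.
Qed.

Lemma L3 p w a b : p \in Dpts A ->
  p (vE (ua w a) (ua w b)) =
  (uterm_D w (iter M T p) a != uterm_D w (iter M T p) b).
Proof.
move=> pD; rewrite L2 // !pt_ua.
by case: (odd _); rewrite /= ?eqb_negLR ?negbK.
Qed.

Lemma DE_eq p a : p \in Dpts A -> p (DE a a) = false.
Proof.
move=> pD; case/DptsP: (pD) => H1 H2 H3 H4.
rewrite /DE; elim: W => [|w W' IH] //=.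
by rewrite H2 IH L3 // eqxx.
Qed.

Lemma DE_neq p a b : p \in Dpts A -> a != b -> p (DE a b) = true.
Proof.
move=> pD nab; have [q qD qab] := sepA' nab.
have [w [inW hw]] := HW (iterT_Dpts M pD) qD.
case/DptsP: (pD) => H1 H2 H3 H4.
rewrite /DE; elim: W inW => [|w' W' IH] //= [->|inW].
  by rewrite H2 L3 // hw qab.
by rewrite H2 IH // orbT.
Qed.

Lemma dE_discr a b z : dE a b z = discr a b z.
Proof.
apply: sepA => p pD; case/DptsP: (pD) => H1 H2 H3 H4.
have TpD : T p \in Dpts A by apply: uterm_Dpts.
rewrite /dE /discr H2 !H1 pt_ua ot.
case: (eqVneq a b) => [<-|nab] /=.
  by rewrite !DE_eq //= orbF.
by rewrite !DE_neq.
Qed.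

End Disc.

From mathcomp Require Import zify.

Section Terms.
Variables (F : Type) (neg : F -> bool).

Definition tuaT (V : Type) (w : seq F) (s : term F V) :=
  foldl (fun s f => TOp f s) s w.

Lemma teval_tua (A : cornish F neg) V (e : V -> ccar A) w s :
  teval e (tuaT w s) = ua w (teval e s).
Proof. by elim: w s => //= f w IH s; rewrite IH. Qed.

Definition X0 : term F 'I_3 := @TVar F 'I_3 (@Ordinal 3 0 isT).
Definition X1 : term F 'I_3 := @TVar F 'I_3 (@Ordinal 3 1 isT).
Definition X2 : term F 'I_3 := @TVar F 'I_3 (@Ordinal 3 2 isT).

Variables (t : seq F) (M : nat) (W : seq (seq F)).
Definition sT (s : term F 'I_3) := tuaT (tM t M) s.
Definition uT s1 s2 := TJoin (TMeet s1 (sT s2)) (TMeet (sT s1) s2).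
Definition vT s1 s2 := tuaT (tM t M ++ tM t M) (uT s1 s2).
Definition DT s1 s2 :=
  foldr (fun w acc => TJoin (vT (tuaT w s1) (tuaT w s2)) acc) TBot W.
Definition dT := TJoin (TMeet (tuaT t (DT X0 X1)) X2) (TMeet (DT X0 X1) X0).

Lemma teval_dT (A : cornish F neg) (x y z : ccar A) :
  teval (env3 x y z) dT = dE t M W x y z.
Proof.
have HD : forall s1 s2, teval (env3 x y z) (DT s1 s2) =
   DE t M W (teval (env3 x y z) s1) (teval (env3 x y z) s2).
  move=> s1 s2; rewrite /DT /DE; elim: W => //= w W' ->.
  by rewrite /vT /vE /uE /sE !teval_tua /= !teval_tua.
by rewrite /dT /dE /= teval_tua HD.
Qed.
End Terms.

Local Close Scope order_scope.
Lemma In_app_l (T : Type) (x : T) l r : List.In x l -> List.In x (l ++ r).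
Proof. by elim: l => //= y l IH [->|h]; [left|right; apply: IH]. Qed.
Lemma In_app_r (T : Type) (x : T) l r : List.In x r -> List.In x (l ++ r).
Proof. by elim: l => //= y l IH h; right; apply: IH. Qed.
Lemma In_flatten (T : Type) (x : T) l Ls :
  List.In x l -> List.In l Ls -> List.In x (flatten Ls).
Proof.
move=> hx; elim: Ls => //= l' Ls IH [->|h]; first exact: In_app_l.
by apply: In_app_r; apply: IH.
Qed.

Lemma list_choice (K : eqType) (V : Type) (l : seq K) (P : K -> V -> Prop) :
  (forall k, k \in l -> exists v, P k v) ->
  exists vs : seq V, forall k, k \in l -> exists v, List.In v vs /\ P k v.
Proof.
elim: l => [|k l IH] H; first by exists [::].
have [v Pv] := H k (mem_head _ _).
have [vs Hvs] := IH (fun k' hk => H k' (@mem_behead _ (k :: l) k' hk)).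
exists (v :: vs) => k'; rewrite in_cons => /orP [/eqP ->|hk].
  by exists v; split; [left|].
by have [v' [iv' pv']] := Hvs k' hk; exists v'; split; [right|].
Qed.

Lemma fin_choice (K : finType) V (P : K -> V -> Prop) :
  (forall k, exists v, P k v) ->
  exists vs : seq V, forall k, exists v, List.In v vs /\ P k v.
Proof.
move=> H; have [vs Hvs] := @list_choice K V (enum K) P (fun k _ => H k).
by exists vs => k; apply: Hvs; rewrite mem_enum.
Qed.

Lemma list_odd (K : eqType) (l : seq K) (G : K -> nat -> Prop) :
  (forall k M1 M2, G k M1 -> odd M2 -> G k (M1 * M2)) ->
  (forall k, k \in l -> exists M, odd M /\ G k M) ->
  exists M, odd M /\ forall k, k \in l -> G k M.
Proof.
move=> Hc; elim: l => [|k l IH] H; first by exists 1.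
have [M1 [o1 G1]] := H k (mem_head _ _).
have [M2 [o2 G2]] := IH (fun k' hk => H k' (@mem_behead _ (k :: l) k' hk)).
exists (M1 * M2); split; first by rewrite oddM o1 o2.
move=> k'; rewrite in_cons => /orP [/eqP ->|hk]; first exact: Hc.
by rewrite mulnC; apply: Hc => //; apply: G2.
Qed.

Lemma fin_odd (K : finType) (G : K -> nat -> Prop) :
  (forall k M1 M2, G k M1 -> odd M2 -> G k (M1 * M2)) ->
  (forall k, exists M, odd M /\ G k M) ->
  exists M, odd M /\ forall k, G k M.
Proof.
move=> Hc H; have [M [oM HM]] := @list_odd K (enum K) G Hc (fun k _ => H k).
by exists M; split => // k; apply: HM; rewrite mem_enum.
Qed.

Lemma cycle_iter (T : Type) (g : T -> T) a n m :
  n <= m -> iter m g a = iter n g a ->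
  forall r, n <= r -> forall j, iter (r + (m - n) * j) g a = iter r g a.
Proof.
move=> nm hm r nr; elim=> [|j IH]; first by rewrite muln0 addn0.
have -> : r + (m - n) * j.+1 = (r + (m - n) * j - n) + m by rewrite mulnS; nia.
rewrite iterD hm -iterD.
by have -> : r + (m - n) * j - n + n = r + (m - n) * j by lia.
Qed.

Lemma odd_cycle_M (T : Type) (g : T -> T) a :
  reaches_odd_cycle g a ->
  exists M, odd M /\ forall k, 0 < k -> M %| k -> iter (k + k) g a = iter k g a.
Proof.
case=> n [m [nm _ hm om]].
exists ((m - n) * n.*2.+1); split; first by rewrite oddM om /= odd_double.
move=> k k0 dk.
have L0 : 0 < m - n by rewrite subn_gt0.
have dL : (m - n) %| k by apply: dvdn_trans dk; apply: dvdn_mulr.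
have nk : n <= k.
  have := dvdn_leq k0 dk; move=> h; nia.
rewrite -{2}(divnK dL) mulnC.
by apply: cycle_iter => //; apply: ltnW.
Qed.

Local Open Scope order_scope.
Section Final.
Variables (F : Type) (neg : F -> bool).

Lemma common_disc (I : finType) (B : I -> cornish F neg) (t : seq F) (M : nat) :
  (forall i (S : {set {ffun ccar (B i) -> bool}}),
     Dsubstructure S -> S = set0 \/ S = Dpts (B i)) ->
  odd (count neg t) -> odd M ->
  (forall i p, p \in Dpts (B i) ->
     iter (M + M) (uterm_D (A:=B i) t) p = iter M (uterm_D (A:=B i) t) p) ->
  exists d : term F 'I_3, forall i, is_discriminator_term (B i) d.
Proof.
move=> H ot oM HM.
have HWi : forall i, exists Wi : seq (seq F), forall c q,
    c \in Dpts (B i) -> q \in Dpts (B i) ->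
    exists w, List.In w Wi /\ uterm_D w c = q.
  move=> i.
  have ex : forall cq : ({ffun ccar (B i) -> bool} * {ffun ccar (B i) -> bool})%type,
      exists w : seq F, cq.1 \in Dpts (B i) -> cq.2 \in Dpts (B i) ->
                  uterm_D w cq.1 = cq.2.
    case=> c q /=.
    case cD: (c \in Dpts (B i)); last by exists [::].
    case qD: (q \in Dpts (B i)); last by exists [::].
    have [w ->] := reach (H i) cD qD.
    by exists w.
  have [Wi HWi] := fin_choice ex.
  exists Wi => c q cD qD.
  have [w [iw hw]] := HWi (c, q).
  by exists w; split => //; apply: hw.
have [Ws HWs] := fin_choice HWi.
exists (dT t M (flatten Ws)) => i x y z.
rewrite teval_dT; apply: dE_discr => //.
  by move=> p pD; apply: HM.
move=> c q cD qD.
have [Wi [iWi HWi']] := HWs i.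
have [w [iw hw]] := HWi' c q cD qD.
by exists w; split => //; apply: In_flatten iw iWi.
Qed.

Section Semi.
Variables (A : cornish F neg).

Lemma S_ua (S : {set ccar A * ccar A}) w a b :
  subuniv2 S -> (a, b) \in S -> (ua w a, ua w b) \in S.
Proof.
case=> _ _ _ _ Hop; elim: w a b => //= f w IH a b h.
by apply: IH; apply: (Hop f (a, b)).
Qed.

Lemma S_term (S : {set ccar A * ccar A}) (e1 e2 : 'I_3 -> ccar A) :
  subuniv2 S -> (forall v, (e1 v, e2 v) \in S) ->
  forall s, (teval e1 s, teval e2 s) \in S.
Proof.
case=> H0 H1 HI HU Hop he; elim=> //= [s1 IH1 s2 IH2|s1 IH1 s2 IH2|f s IH].
- exact: (HI _ _ IH1 IH2).
- exact: (HU _ _ IH1 IH2).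
- exact: (Hop f _ IH).
Qed.

Lemma semi (t : seq F) (d : term F 'I_3) :
  (forall S : {set {ffun ccar A -> bool}}, Dsubstructure S -> S = set0 \/ S = Dpts A) ->
  odd (count neg t) ->
  (forall x y, x \in Dpts A -> y \in Dpts A -> uterm_D t x = uterm_D t y) ->
  is_discriminator_term A d -> semi_primal A.
Proof.
move=> H ot Hc Hd; split.
  exists (TJoin (TJoin (TMeet (X0 F) (X1 F)) (TMeet (X1 F) (X2 F))) (TMeet (X0 F) (X2 F))) => x y /=.
  rewrite /env3 /=; split; apply: sepA => p pD; case/DptsP: pD => H1 H2 _ _;
    rewrite !H2 !H1; by case: (p x); case: (p y).
move=> S HS.
case: (classic (exists a b b', [/\ (a, b) \in S, (a, b') \in S & b != b'])).
  case=> a [b [b' [ab ab' bb']]]; left.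
  case: (HS) => S0 S1 SI SU Sop.
  exists [set u | [exists v, (u, v) \in S]], [set v | [exists u, (u, v) \in S]].
  split.
  - split; rewrite ?inE.
    + by apply/existsP; exists \bot.
    + by apply/existsP; exists \top.
    + move=> x y; rewrite !inE => /existsP [v hv] /existsP [v' hv'].
      by apply/existsP; exists (v `&` v'); apply: (SI _ _ hv hv').
    + move=> x y; rewrite !inE => /existsP [v hv] /existsP [v' hv'].
      by apply/existsP; exists (v `|` v'); apply: (SU _ _ hv hv').
    + move=> f x; rewrite !inE => /existsP [v hv].
      by apply/existsP; exists (cop A f v); apply: (Sop f _ hv).
  - split; rewrite ?inE.
    + by apply/existsP; exists \bot.
    + by apply/existsP; exists \top.
    + move=> x y; rewrite !inE => /existsP [v hv] /existsP [v' hv'].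
      by apply/existsP; exists (v `&` v'); apply: (SI _ _ hv hv').
    + move=> x y; rewrite !inE => /existsP [v hv] /existsP [v' hv'].
      by apply/existsP; exists (v `|` v'); apply: (SU _ _ hv hv').
    + move=> f x; rewrite !inE => /existsP [v hv].
      by apply/existsP; exists (cop A f v); apply: (Sop f _ hv).
  have step1 : forall u v, (u, v) \in S -> (u, b) \in S.
    move=> u v uv.
    have := S_term (e1 := env3 a a u) (e2 := env3 b b' v) HS _ d.
    rewrite !Hd /discr eqxx bb'; apply.
    by case=> [[|[|[|//]]] ?] /=.
  have nt : (\bot : ccar A) != \top.
    apply: contra bb' => /eqP e.
    have all0 : forall x : ccar A, x = \bot.
      by move=> x; apply/le_anti; rewrite le0x e lex1.
    by rewrite (all0 b) (all0 b').
  apply/setP => -[u w]; rewrite !inE /=; apply/idP/andP.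
    by move=> h; split; apply/existsP; [exists w|exists u].
  case=> /existsP [v uv] /existsP [x xw].
  pose u2 : ccar A := if u == \bot then \top else \bot.
  have u2u : u != u2.
    by rewrite /u2; case: (eqVneq u \bot) => [->|nu]; [exact: nt | exact: nu].
  have u2S : (u2, b) \in S by apply: (step1 _ u2); rewrite /u2; case: eqP.
  have := S_term (e1 := env3 u u2 x) (e2 := env3 b b w) HS _ d.
  rewrite !Hd /discr eqxx u2u; apply.
  by case=> [[|[|[|//]]] ?] /=; [apply: step1 uv| |].
move=> nfun; right.
have func : forall a b b', (a, b) \in S -> (a, b') \in S -> b = b'.
  move=> a b b' h h'; apply/eqP/negPn/negP => nb; apply: nfun.
  by exists a, b, b'.
case: (HS) => S0 S1 SI SU Sop.
have diag : forall a b, (a, b) \in S -> a = b.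
  move=> a b ab.
  case: (set_0Vmem (Dpts A)) => [D0|[x0 x0D]].
    by apply: sepA => p; rewrite D0 inE.
  set c0 := uterm_D t x0.
  have c0D : c0 \in Dpts A by apply: uterm_Dpts.
  have Tp : forall p, p \in Dpts A -> uterm_D t p = c0 by move=> p pD; apply: Hc.
  have fact : forall p e, p \in Dpts A -> p (ua t e) = ~~ c0 e.
    by move=> p e pD; rewrite pt_ua ot Tp.
  have c0S : forall a b, (a, b) \in S -> c0 a = c0 b.
    move=> a' b' h; have h' := S_ua t HS h.
    case/DptsP: (c0D) => _ _ cb ct.
    case ca: (c0 a').
    + have e1 : ua t a' = \bot.
        apply: sepA => p pD; case/DptsP: (pD) => _ _ -> _; by rewrite fact // ca.
      rewrite e1 in h'; have := func _ _ _ h' S0 => e2.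
      by move: (fact c0 b' c0D); rewrite e2 cb; case: (c0 b').
    + have e1 : ua t a' = \top.
        apply: sepA => p pD; case/DptsP: (pD) => _ _ _ ->; by rewrite fact // ca.
      rewrite e1 in h'; have := func _ _ _ h' S1 => e2.
      by move: (fact c0 b' c0D); rewrite e2 ct; case: (c0 b').
  apply: sepA => p pD.
  have [w ->] := reach H c0D pD.
  by rewrite (K1 w c0 a) (K1 w c0 b) (c0S _ _ (S_ua w HS ab)).
exists [set a | (a, a) \in S]; split.
  split; rewrite ?inE //.
  - by move=> x y; rewrite !inE => hx hy; apply: (SI _ _ hx hy).
  - by move=> x y; rewrite !inE => hx hy; apply: (SU _ _ hx hy).
  - by move=> f x; rewrite !inE => hx; apply: (Sop f _ hx).
apply/setP => -[a b]; apply/idP/imsetP.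
  move=> h; have e := diag _ _ h; subst b.
  by exists a; rewrite ?inE.
by case=> x; rewrite inE => hx [-> ->].
Qed.
End Semi.
End Final.

Local Close Scope order_scope.
Unset Implicit Arguments.
Set Strict Implicit.

Theorem theorem5p11 (F : Type) (neg : F -> bool) (I : finType)
  (B : I -> cornish F neg) :
  (* (i) no non-empty proper substructures *)
  (forall i (S : {set {ffun ccar (B i) -> bool}}),
     Dsubstructure S -> S = set0 \/ S = Dpts (B i)) ->
  (* (ii) => quasi-primal with a common discriminator term *)
  ((exists t : seq F, in_Tminus neg t /\
      forall i, forall a, a \in Dpts (B i) ->
        reaches_odd_cycle (uterm_D (A := B i) t) a) ->
   (forall i, quasi_primal (B i)) /\
   exists d : term F 'I_3, forall i, is_discriminator_term (B i) d)
  /\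
  (* (ii)' => semi-primal with a common discriminator term *)
  ((exists t : seq F, in_Tminus neg t /\
      forall i, forall x y, x \in Dpts (B i) -> y \in Dpts (B i) ->
        uterm_D (A := B i) t x = uterm_D (A := B i) t y) ->
   (forall i, semi_primal (B i)) /\
   exists d : term F 'I_3, forall i, is_discriminator_term (B i) d).
Proof.
move=> H; split.
  case=> t [ot Hcyc].
  pose G := fun i M => forall a, a \in Dpts (B i) -> forall k, (0 < k)%N -> (M %| k)%N ->
     iter (k + k) (uterm_D (A := B i) t) a = iter k (uterm_D (A := B i) t) a.
  have [M [oM HM]] : exists M, odd M /\ forall i, G i M.
    apply: fin_odd.
      move=> i M1 M2 G1 o2 a aD k k0 dk; apply: G1 => //.
      by apply: dvdn_trans dk; apply: dvdn_mulr.
    move=> i.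
    pose Ga := fun a M => a \in Dpts (B i) -> forall k, (0 < k)%N -> (M %| k)%N ->
       iter (k + k) (uterm_D (A := B i) t) a = iter k (uterm_D (A := B i) t) a.
    have [M [oM HM]] : exists M, odd M /\ forall a, Ga a M.
      apply: fin_odd.
        move=> a M1 M2 G1 o2 aD k k0 dk; apply: G1 => //.
        by apply: dvdn_trans dk; apply: dvdn_mulr.
      move=> a; case aD: (a \in Dpts (B i)); last by exists 1%N; split => // h; rewrite h in aD.
      have [M [oM HM]] := odd_cycle_M (Hcyc i a aD).
      by exists M; split => // _.
    by exists M; split => // a; apply: HM.
  have [d Hd] := common_disc H ot oM (fun i p pD => HM i p pD M (odd_gt0 oM) (dvdnn M)).
  by split => [i|]; [exists d; apply: Hd | exists d].
case=> t [ot Hc].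
have [d Hd] : exists d : term F 'I_3, forall i, is_discriminator_term (B i) d.
  apply: (common_disc (M := 1%N) H ot) => // i p pD /=.
  by apply: Hc => //; apply: uterm_Dpts.
split => [i|]; last by exists d.
by apply: (semi (t := t) (d := d) (H i) ot (Hc i) (Hd i)).
Qed.
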